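(* Let $X$ be a finite quandle with connected components $C_1,\dots,C_k$, let $s=(x_1,\dots,x_n)\in X^n$, and let $n_j=|\{1\le i\le n:x_i\in C_j\}|$. Suppose $n_j>|C_j|$ for some $1\le j\le k$. Then the image in $S_n$ of the stabilizer of $s$ in $B_n$ is not contained in $A_n$.
   Context: A quandle is a set $X$ with an operation $x^y$ such that $x\mapsto x^y$ is bijective for each $y$, $(z^x)^y=(z^y)^{x^y}$ and $x^x=x$; its connected components are the classes of the smallest equivalence relation with $x\sim x^y$. $B_n$ acts on $X^n$ from the right by $(\dots,x_i,x_{i+1},\dots)^{\sigma_i}=(\dots,x_{i+1},x_i^{x_{i+1}},\dots)$, and $B_n\to S_n$ sends $\sigma_i\mapsto(i\ i+1)$. *)

(* Defs.v *)
From mathcomp Require Import all_boot all_order all_fingroup all_solvable.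
Set Implicit Arguments. Unset Strict Implicit. Unset Printing Implicit Defensive.

Definition is_quandle (X : Type) (op : X -> X -> X) : Prop :=
  [/\ forall y, bijective (fun x => op x y),
      forall x y z, op (op z x) y = op (op z y) (op x y)
    & forall x, op x x = x].

Definition qstep (X : finType) (op : X -> X -> X) : rel X :=
  fun a b => [exists c, (b == op a c) || (a == op b c)].

(* The smallest equivalence relation with x ~ x^y: reflexive-transitive
   closure of the symmetric one-step relation. *)
Definition qconn (X : finType) (op : X -> X -> X) : rel X :=
  connect (qstep op).

Definition qcomp (X : finType) (op : X -> X -> X) (x : X) : {set X} :=
  [set y | qconn op x y].

Definition qinv (X : finType) (op : X -> X -> X) (b a : X) : X :=
  odflt b [pick z | op z a == b].

Definition getq (X : Type) (n : nat) (s : {ffun 'I_n -> X}) (j : nat) (d : X) : X :=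
  odflt d (omap s (insub j)).

(* A letter (i, b) of a braid word: sigma_{i+1} (0-based index i, i.+1 < n)
   if b = true, its inverse if b = false. *)
Definition letter_ok (n : nat) (g : 'I_n * bool) : bool := g.1.+1 < n.

(* Right action of a letter on X^n:
   (.., x_i, x_{i+1}, ..)^{sigma_i} = (.., x_{i+1}, x_i^{x_{i+1}}, ..). *)
Definition act_letter (X : finType) (op : X -> X -> X) (n : nat)
    (s : {ffun 'I_n -> X}) (g : 'I_n * bool) : {ffun 'I_n -> X} :=
  let i := val g.1 in
  if g.2 then
    [ffun k : 'I_n => if val k == i then getq s i.+1 (s k)
                      else if val k == i.+1 then op (getq s i (s k)) (s k)
                      else s k]
  else
    [ffun k : 'I_n => if val k == i then qinv op (getq s i.+1 (s k)) (s k)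
                      else if val k == i.+1 then getq s i (s k)
                      else s k].

Definition act_word (X : finType) (op : X -> X -> X) (n : nat)
    (s : {ffun 'I_n -> X}) (w : seq ('I_n * bool)) : {ffun 'I_n -> X} :=
  foldl (@act_letter X op n) s w.

Definition perm_letter (n : nat) (g : 'I_n * bool) : {perm 'I_n} :=
  tperm g.1 (odflt g.1 (insub (val g.1).+1)).

Definition perm_word (n : nat) (w : seq ('I_n * bool)) : {perm 'I_n} :=
  (\prod_(g <- w) perm_letter g)%g.

(* Main.v *)
Require Import Defs.
From mathcomp Require Import all_boot all_order all_fingroup all_solvable.
From mathcomp Require Import zify.

Lemma getq_ord (X : Type) n (s : {ffun 'I_n -> X}) (k : 'I_n) d :
  getq s (val k) d = s k.
Proof. by rewrite /getq insubT ?ltn_ord // => h /=; congr (s _); apply: val_inj. Qed.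

Lemma getq_lt (X : Type) n (s : {ffun 'I_n -> X}) j (h : j < n) d :
  getq s j d = s (Ordinal h).
Proof. by rewrite /getq insubT ?ltn_ord // => h /=; congr (s _); apply: val_inj. Qed.

Lemma perm_word_odd n (w : seq ('I_n * bool)) :
  all (@letter_ok n) w -> odd_perm (perm_word w) = odd (size w).
Proof.
elim: w => [|g w IH] /=; first by rewrite /perm_word big_nil odd_perm1.
move/andP=> [hg hw]; have := IH hw; rewrite /perm_word big_cons odd_permM => ->.
rewrite /perm_letter insubT //= odd_tperm.
suff -> : (g.1 != Sub g.1.+1 hg) by [].
by apply/eqP => /(congr1 val) /= /eqP; rewrite eqn_leq ltnn andbF.
Qed.

Section Act.
Variables (X : finType) (op : X -> X -> X).
Hypothesis hq : is_quandle op.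

Lemma undo1 n (s : {ffun 'I_n -> X}) (i : 'I_n) : i.+1 < n ->
  act_letter op (act_letter op s (i, true)) (i, false) = s.
Proof.
move=> hi; apply/ffunP => k.
rewrite /act_letter /= !ffunE !(getq_lt _ _ _ _ hi) !getq_ord !ffunE /=.
have e1 : (i.+1 == i) = false by rewrite eqn_leq ltnn.
have e2 : (nat_of_ord i == i.+1) = false by rewrite eqn_leq ltnn andbF.
rewrite e1 e2 !eqxx !getq_ord.
case: (eqVneq (nat_of_ord k) i) => [ek|nk].
  have -> : k = i by apply: val_inj.
  rewrite /qinv; case: pickP => [z /eqP|H] /=.
    case: hq => [bij _ _]; case: (bij (s (Ordinal hi))) => f fK _ H.
    by rewrite -[z]fK H fK.
  by have := H (s i); rewrite eqxx.
case: eqP => [ek|//].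
by rewrite -ek getq_ord.
Qed.

Definition invw {n} (w : seq ('I_n * bool)) := rev [seq (g.1, false) | g <- w].

Lemma undo n (s : {ffun 'I_n -> X}) w :
  all (@letter_ok n) w -> all snd w ->
  act_word op (act_word op s w) (invw w) = s.
Proof.
elim: w s => [|g w IH] s //= /andP[hg hw] /andP[h2 hw2].
rewrite /invw map_cons rev_cons -cats1 /act_word foldl_cat -/(act_word _ _ _).
have := IH (act_letter op s g) hw hw2; rewrite /act_word /invw => -> /=.
by case: g hg h2 => i [] //= hg _; rewrite undo1.
Qed.


Definition mv n (j m : nat) : seq ('I_n.+1 * bool) :=
  [seq (inord (j - k.+1), true) | k <- iota 0 m].

Lemma mvS n j m : mv n j m.+1 = rcons (mv n j m) (inord (j - m.+1), true).
Proof. by rewrite /mv -[m.+1]addn1 iotaD map_cat cats1 add0n addn1. Qed.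

Lemma mv_ok n j m : m <= j -> j < n.+1 ->
  all (@letter_ok n.+1) (mv n j m) && all snd (mv n j m).
Proof.
move=> hm hj; apply/andP; split; apply/allP => g.
  move=> /mapP [k]; rewrite mem_iota => /andP[_ hk] ->.
  rewrite /letter_ok /= inordK; lia.
by move=> /mapP [k] _ ->.
Qed.

Lemma mv_act n (s : {ffun 'I_n.+1 -> X}) j m : m <= j -> j < n.+1 ->
  (forall k : 'I_n.+1, k < j - m -> act_word op s (mv n j m) k = s k) /\
  act_word op s (mv n j m) (inord (j - m)) = s (inord j).
Proof.
move=> + hj; elim: m => [|m IH] hm; first by rewrite subn0.
have [IH1 IH2] := IH (ltnW hm).
rewrite mvS /act_word foldl_rcons -/(act_word _ _ _).
set t := act_word op s (mv n j m).
have hl : (j - m.+1) < n.+1 by lia.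
split.
  move=> k hk; rewrite /act_letter /= ffunE inordK //.
  have -> : (nat_of_ord k == j - m.+1) = false by apply/eqP; lia.
  have -> : (nat_of_ord k == (j - m.+1).+1) = false by apply/eqP; lia.
  apply: IH1; lia.
rewrite /act_letter /= ffunE inordK // eqxx.
have hl1 : (j - m.+1).+1 < n.+1 by lia.
rewrite (getq_lt _ _ _ _ hl1) -IH2; congr (t _); apply: val_inj; rewrite /= inordK; lia.
Qed.

End Act.

From mathcomp Require Import zify.

Lemma main_ij (X : finType) (op : X -> X -> X) (n : nat)
    (s : {ffun 'I_n.+1 -> X}) (i j : 'I_n.+1) :
  is_quandle op -> i < j -> s i = s j ->
  exists w : seq ('I_n.+1 * bool),
    [/\ all (@letter_ok n.+1) w,
        act_word op s w = s
      & perm_word w \notin @Alt 'I_n.+1].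
Proof.
move=> hq hij eij.
set m := j - i.+1.
have hm : m <= j by rewrite /m; lia.
have hj : (nat_of_ord j) < n.+1 by [].
have /andP [ok1 ok2] := mv_ok n j m hm hj.
have [t1 t2] := @mv_act X op n s j m hm hj.
set t := act_word op s (mv n j m) in t1 t2.
exists (mv n j m ++ (i, true) :: invw (mv n j m)); split.
- rewrite all_cat ok1 /= /invw all_rev all_map.
  apply/andP; split; first by rewrite /letter_ok /=; lia.
  by apply: sub_all ok1.
- rewrite /act_word foldl_cat /= -/(act_word _ _ _) -/t.
  have -> : act_letter op t (i, true) = t.
    have ti : t i = s i by apply: t1; rewrite /m; lia.
    have ej : inord (j - m) = inord i.+1 :> 'I_n.+1 by congr inord; rewrite /m; lia.
    rewrite ej in t2.
    have hi1 : i.+1 < n.+1 by lia.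
    apply/ffunP => k; rewrite /act_letter /= ffunE.
    case: (eqVneq (nat_of_ord k) i) => [ek|nk].
      rewrite (getq_lt _ _ _ _ hi1).
      have -> : Ordinal hi1 = inord i.+1 by apply: val_inj; rewrite /= inordK.
      have -> : k = i by apply: val_inj.
      by rewrite t2 ti eij inord_val.
    case: (eqVneq (nat_of_ord k) i.+1) => [ek|//].
    have ek' : k = inord i.+1 by apply: val_inj; rewrite /= inordK.
    rewrite getq_ord ti ek' t2 inord_val -eij.
    by case: hq.
  rewrite /t.
  exact: (@undo X op hq _ s _ ok1 ok2).
- rewrite Alt_even perm_word_odd; last first.
    rewrite all_cat ok1 /= /invw all_rev all_map.
    apply/andP; split; first by rewrite /letter_ok /=; lia.
    by apply: sub_all ok1.
  by rewrite size_cat /= /invw size_rev size_map addnS /= oddD addbb.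
Qed.

Theorem corollary4p36 (X : finType) (op : X -> X -> X) (n : nat)
    (s : {ffun 'I_n -> X}) :
  is_quandle op ->
  (exists c : X,
     #|qcomp op c| < #|[set i : 'I_n | s i \in qcomp op c]|) ->
  exists w : seq ('I_n * bool),
    [/\ all (@letter_ok n) w,
        act_word op s w = s
      & perm_word w \notin @Alt 'I_n].
Proof.
move=> hq [c hc].
set A := [set i : 'I_n | s i \in qcomp op c] in hc.
have [inj|ninj] := boolP [forall i, forall j, (s i == s j) ==> (i == j)].
  exfalso; move: hc; rewrite ltnNge => /negP; apply.
  rewrite -(@card_in_imset _ _ s A); last first.
    by move=> x y _ _ exy; apply/eqP; move/forallP: inj => /(_ x) /forallP /(_ y) /implyP; apply; apply/eqP.
  apply: subset_leq_card; apply/subsetP => y /imsetP [x]; rewrite inE => hx ->; exact: hx.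
move/forallPn: ninj => [i /forallPn [j]]; rewrite negb_imply => /andP[/eqP eij nij].
clear hc A.
move: eij nij; move: i j; move: s; case: n => [|n] s i j eij nij; first by move: (ltn_ord i); rewrite ltn0.
case: (ltngtP (nat_of_ord i) j) => [lt|gt|e].
- exact: (@main_ij X op n s i j hq lt eij).
- exact: (@main_ij X op n s j i hq gt (esym eij)).
- by exfalso; move/eqP: nij; apply; apply: val_inj.
Qed.
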